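(* Let $G$ be a graph of order $n$ and maximum degree $3$. Then (i) $W^+(G,K_3)\ge n/2$, with equality if and only if $G$ is isomorphic to the disjoint union of $n/4$ copies of $K_4$; (ii) if $G$ has no connected component isomorphic to $K_4$, then $W^+(G,K_3)\ge 2n/3$, with equality if and only if $G$ contains the disjoint union of $n/3$ copies of $K_3$ as a subgraph; (iii) if $G$ has no connected component isomorphic to $K_4$ and each triangle of $G$ shares an edge with another triangle of $G$, then $W^+(G,K_3)\ge 3n/4$, with equality if and only if $G$ contains the disjoint union of $n/4$ copies of $K_4-e$ (i.e. $K_4$ minus an edge) as a subgraph.
   Context: A $K_3$-WORM coloring of a graph $G$ is an assignment of colors to the vertices of $G$ such that the three vertices of every triangle of $G$ receive exactly two distinct colors. For a $K_3$-WORM-colorable graph $G$ (every graph of maximum degree at most 3 is such), $W^+(G,K_3)$ denotes the maximum number of colors used in a $K_3$-WORM coloring of $G$. *)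

(* Defs.v *)
From mathcomp Require Import all_boot.
Set Implicit Arguments. Unset Strict Implicit. Unset Printing Implicit Defensive.

Section Graphs.
Variable T : finType.
Variable e : rel T.

Definition simple_graph := symmetric e /\ irreflexive e.

Definition deg (x : T) : nat := #|[set y | e x y]|.

Definition max_degree3 := (forall x, deg x <= 3) /\ (exists x, deg x = 3).

Definition triangle (t : {set T}) :=
  #|t| = 3 /\ forall x y, x \in t -> y \in t -> x != y -> e x y.

Definition ncolors_on (c : T -> nat) (t : {set T}) : nat :=
  size (undup [seq c x | x <- enum t]).

Definition ncolors (c : T -> nat) : nat := ncolors_on c [set: T].

Definition K3_WORM (c : T -> nat) := forall t, triangle t -> ncolors_on c t = 2.

Definition Wplus_K3 (k : nat) :=
  (exists c, K3_WORM c /\ ncolors c = k) /\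
  (forall c, K3_WORM c -> ncolors c <= k).

Definition component (x : T) : {set T} := [set y | connect e x y].

Definition has_K4_component :=
  exists x, #|component x| = 4 /\
    forall y z, y \in component x -> z \in component x -> y != z -> e y z.

Definition triangles_paired :=
  forall t, triangle t -> exists t', triangle t' /\ t' != t /\ 2 <= #|t :&: t'|.
End Graphs.

(* The disjoint union of m copies of a graph H on 'I_k: vertex set 'I_m * 'I_k *)
Definition copies (m : nat) {k : nat} (H : rel 'I_k) : rel ('I_m * 'I_k) :=
  fun u v => (u.1 == v.1) && H u.2 v.2.
Arguments copies m {k} H.

Definition K4 : rel 'I_4 := fun a b => a != b.
Definition K3 : rel 'I_3 := fun a b => a != b.
Definition K4_minus_e : rel 'I_4 :=
  fun a b => (a != b) && ~~ ((val a == 2) && (val b == 3) || (val a == 3) && (val b == 2)).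

Definition isomorphic (T U : finType) (e : rel T) (f : rel U) :=
  exists g : T -> U, bijective g /\ forall x y, e x y = f (g x) (g y).

(* f (on U) is a (not necessarily induced) subgraph of e (on T) *)
Definition contains_subgraph (T U : finType) (e : rel T) (f : rel U) :=
  exists g : U -> T, injective g /\ forall x y, f x y -> e (g x) (g y).

(* Main.v *)
Require Import Defs.
From mathcomp Require Import all_boot.
From mathcomp Require Import zify.
Set Implicit Arguments. Unset Strict Implicit. Unset Printing Implicit Defensive.

Lemma undup_size_eq (A : eqType) (s1 s2 : seq A) : s1 =i s2 ->
  size (undup s1) = size (undup s2).
Proof.
move=> H; apply/eqP; rewrite eqn_leq !uniq_leq_size ?undup_uniq //.
- by move=> x; rewrite !mem_undup H.
- by move=> x; rewrite !mem_undup H.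
Qed.

Lemma undup_size_le (A : eqType) (s1 s2 : seq A) : {subset s1 <= s2} ->
  size (undup s1) <= size s2.
Proof. by move=> H; apply: uniq_leq_size; rewrite ?undup_uniq // => x; rewrite mem_undup => /H. Qed.

Lemma ncol_seq (T : finType) (c : T -> nat) (t : {set T}) (l : seq T) :
  t =i l -> ncolors_on c t = size (undup (map c l)).
Proof.
move=> H; rewrite /ncolors_on; apply: undup_size_eq => a.
by apply/mapP/mapP => -[x Hx ->]; exists x => //; move: Hx; rewrite mem_enum H.
Qed.

Lemma ncol_le (T : finType) (c : T -> nat) (t : {set T}) (s : seq nat) :
  (forall x, x \in t -> c x \in s) -> ncolors_on c t <= size s.
Proof.
move=> H; rewrite /ncolors_on; apply: undup_size_le => a /mapP[x Hx ->].
by apply: H; rewrite -mem_enum.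
Qed.

Lemma card3 (T : finType) (a b c : T) : a != b -> a != c -> b != c ->
  #|[set a; b; c]| = 3.
Proof.
move=> ab ac bc.
have -> : #|[set a; b; c]| = #|[:: a; b; c]|.
  by apply: eq_card => x; rewrite !inE orbA.
by apply/card_uniqP; rewrite /= !inE negb_or ab ac bc.
Qed.

Lemma u3 (x y z : nat) : size (undup [:: x; y; z]) = 2 -> ((x == y) || (x == z) || (y == z)) && ~~ ((x == y) && (y == z)).
Proof.
rewrite /= !inE; case E1: (x == y); case E2: (x == z); case E3: (y == z) => //=; lia.
Qed.
Lemma nat4 (a b c d : nat) : size (undup [:: a; b; c]) = 2 -> size (undup [:: a; b; d]) = 2 ->
  size (undup [:: a; c; d]) = 2 -> size (undup [:: b; c; d]) = 2 -> size (undup [:: a; b; c; d]) <= 2.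
Proof.
move=> /u3 h1 /u3 h2 /u3 h3 /u3 h4.
have [E|NE] := eqVneq b a.
- apply: (@leq_trans (size [:: a; c])); last by [].
  apply: undup_size_le => w; rewrite !inE => /or4P[]/eqP->; rewrite ?eqxx ?orbT //;
  move: h1 h2 h3 h4; rewrite E; lia.
- apply: (@leq_trans (size [:: a; b])); last by [].
  apply: undup_size_le => w; rewrite !inE => /or4P[]/eqP->; rewrite ?eqxx ?orbT //;
  move: h1 h2 h3 h4 NE; lia.
Qed.

Lemma blocks (T : finType) (L : T -> seq T) (s : nat) (x0 : T) :
  (forall x, x \in L x) -> (forall x y, y \in L x -> L y = L x) ->
  (forall x, uniq (L x)) -> (forall x, size (L x) = s.+1) ->
  exists m, exists g : T -> 'I_m * 'I_s.+1,
   [/\ bijective g, m * s.+1 = #|T|,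
       forall x y, ((g x).1 == (g y).1) = (L x == L y) &
       forall x, nth x0 (L x) (g x).2 = x].
Proof.
move=> Lin Lcl Lu Ls.
set S := undup [seq L x | x <- enum T].
have memS : forall x, L x \in S by move=> x; rewrite mem_undup map_f ?mem_enum.
have I1 : forall x, index (L x) S < size S by move=> x; rewrite index_mem.
have I2 : forall x, index x (L x) < s.+1 by move=> x; rewrite -(Ls x) index_mem.
have idxS : forall x y, index (L x) S = index (L y) S -> L x = L y.
  move=> x y H; have := nth_index [::] (memS x); rewrite H nth_index //.
set g := fun x => (Ordinal (I1 x), Ordinal (I2 x)).
have E1 : forall x y, ((g x).1 == (g y).1) = (L x == L y).
  move=> x y; apply/eqP/eqP => [H|H]; last by apply: val_inj; rewrite /= H.
  by apply: idxS; have := congr1 val H.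
have E2 : forall x, nth x0 (L x) (g x).2 = x by move=> x; rewrite /= nth_index.
have gi : injective g.
  move=> x y E.
  have Lxy : L x = L y by apply/eqP; rewrite -E1 E.
  by rewrite -(E2 x) -(E2 y) E Lxy.
have SL : forall i : 'I_(size S), exists a, nth [::] S i = L a.
  move=> i; have := mem_nth [::] (ltn_ord i); rewrite mem_undup => /mapP[a _ ->].
  by exists a.
set h := fun u : 'I_(size S) * 'I_s.+1 => nth x0 (nth [::] S u.1) u.2.
have hi : injective h.
  move=> [i j] [i' j']; rewrite /h /= => E.
  have [a Ha] := SL i; have [a' Ha'] := SL i'.
  rewrite Ha Ha' in E.
  have jl : j < size (L a) by rewrite Ls.
  have jl' : j' < size (L a') by rewrite Ls.
  have z1 := mem_nth x0 jl; have z2 := mem_nth x0 jl'.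
  rewrite E in z1.
  have Laa : L a = L a' by rewrite -(Lcl _ _ z1) (Lcl _ _ z2).
  have ii : i = i'.
    apply: val_inj; apply/eqP; rewrite -(nth_uniq [::] (ltn_ord i) (ltn_ord i') (undup_uniq _)).
    by rewrite Ha Ha' Laa.
  subst i'; rewrite Laa in E.
  have jl0 : j < size (L a') by rewrite Ls.
  have jj : j = j'.
    apply: val_inj; apply/eqP; by rewrite -(nth_uniq x0 jl0 jl' (Lu a')) E.
  by rewrite jj.
have c1 := @leq_card _ _ g gi; have c2 := @leq_card _ _ h hi.
rewrite card_prod !card_ord in c1 c2.
exists (size S), g; split => //.
- by apply: inj_card_bij => //; rewrite card_prod !card_ord.
- by apply/eqP; rewrite eqn_leq c1 c2.
Qed.

Lemma ub (T : finType) (c : T -> nat) m s b (h : 'I_m * 'I_s -> T) :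
  (forall x, exists u, h u = x) ->
  (forall i, size (undup [seq c (h (i, j)) | j <- enum 'I_s]) <= b) ->
  ncolors c <= m * b.
Proof.
move=> hs hb.
set F := fun i => undup [seq c (h (i, j)) | j <- enum 'I_s].
apply: (@leq_trans (size (flatten [seq F i | i <- enum 'I_m]))).
  apply: ncol_le => x _; have [[i j] <-] := hs x.
  apply/flattenP; exists (F i); first by rewrite map_f ?mem_enum.
  by rewrite mem_undup map_f ?mem_enum.
rewrite size_flatten /shape -map_comp.
have : forall l : seq 'I_m, sumn [seq (size \o F) i | i <- l] <= size l * b.
  by elim=> [//|i l IH] /=; rewrite mulSn; apply: leq_add => //; exact: hb.
by move=> /(_ (enum 'I_m)); rewrite size_enum_ord.
Qed.

Lemma o3 (j : 'I_3) : [\/ j = inord 0, j = inord 1 | j = inord 2].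
Proof.
case: j => [[|[|[|k]]] Hk] //; [constructor 1|constructor 2|constructor 3];
by apply: val_inj; rewrite /= inordK.
Qed.
Lemma o4 (j : 'I_4) : [\/ j = inord 0, j = inord 1, j = inord 2 | j = inord 3].
Proof.
case: j => [[|[|[|[|k]]]] Hk] //; [constructor 1|constructor 2|constructor 3|constructor 4];
by apply: val_inj; rewrite /= inordK.
Qed.


Lemma max3 (a b c : nat) : a != b -> b != c -> a != c ->
  [|| (a < c) && (b < c), (a < b) && (c < b) | (b < a) && (c < a)].
Proof. lia. Qed.

Section G.
Variable T : finType.
Variable e : rel T.
Hypothesis esym : symmetric e.
Hypothesis eirr : irreflexive e.
Hypothesis edeg : forall x, deg e x <= 3.

Definition N x := [set y | e x y].
Definition cn x y := N x :&: N y.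
Definition lt (x y : T) := (enum_rank x < enum_rank y)%N.

Lemma incn x y w : (w \in cn x y) = e x w && e y w.
Proof. by rewrite !inE. Qed.
Lemma cnC x y : cn x y = cn y x.
Proof. by rewrite /cn setIC. Qed.
Lemma eneq x y : e x y -> x != y.
Proof. by apply: contraTneq => ->; rewrite eirr. Qed.
Lemma ltneq x y : x != y -> lt x y || lt y x.
Proof.
move=> H; rewrite /lt -neq_ltn.
by apply: contra H => /eqP/val_inj/enum_rank_inj ->.
Qed.

Lemma nb3 x a b c d : e x a -> e x b -> e x c -> a != b -> a != c -> b != c ->
  e x d -> [|| d == a, d == b | d == c].
Proof.
move=> xa xb xc ab ac bc xd; apply/negPn/negP; rewrite !negb_or => /and3P[da db dc].
have : 4 <= #|N x|.
  apply/card_geqP; exists [:: a; b; c; d]; split => //.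
    by rewrite /= !inE !negb_or ab ac bc eq_sym da eq_sym db eq_sym dc.
  by move=> z; rewrite !inE => /or4P[] /eqP->.
by have := edeg x; rewrite /deg -/(N x); lia.
Qed.

Lemma set2_mem (a b w : T) : (w \in [set a; b]) = (w == a) || (w == b).
Proof. by rewrite !inE. Qed.

Lemma cn_shape x y z : e x y -> z \in cn x y ->
  cn x y = [set z] \/ exists w, w != z /\ cn x y = [set z; w].
Proof.
move=> xy zin.
have [w /andP[win wz]|none] := pickP [pred w | (w \in cn x y) && (w != z)].
  right; exists w; split => //; apply/setP => t; rewrite set2_mem.
  apply/idP/idP; last by case/orP => /eqP->.
  move=> tin; apply/negPn/negP; rewrite negb_or => /andP[tz tw].
  move: zin win tin; rewrite !incn => /andP[xz yz] /andP[xw yw] /andP[xt yt].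
  have zt : z != t by rewrite eq_sym.
  have wt : w != t by rewrite eq_sym.
  have zw : z != w by rewrite eq_sym.
  have := nb3 xz xw xt zw zt wt xy.
  by case/or3P => /eqP E; [move: yz|move: yw|move: yt]; rewrite -E eirr.
left; apply/setP => t; rewrite inE; apply/idP/idP; last by move/eqP->.
by move=> tin; have := none t; rewrite /= tin /= => /negbFE.
Qed.


Lemma set2C (a b : T) : [set a; b] = [set b; a].
Proof. by apply/setP => w; rewrite !inE orbC. Qed.

Lemma set2_eq1 (a b c : T) : [set a; b] = [set c] -> a = b.
Proof.
move=> H; have : a \in [set c] by rewrite -H !inE eqxx.
have : b \in [set c] by rewrite -H !inE eqxx orbT.
by rewrite !inE => /eqP-> /eqP->.
Qed.

Lemma set2_eq2 (a b c d : T) : [set a; b] = [set c; d] -> a != b ->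
  (a = c /\ b = d) \/ (a = d /\ b = c).
Proof.
move=> H ab.
have : a \in [set c; d] by rewrite -H !inE eqxx.
have : b \in [set c; d] by rewrite -H !inE eqxx orbT.
rewrite !inE => /orP[]/eqP bE /orP[]/eqP aE; subst; try by rewrite eqxx in ab.
- right; split => //.
- left; split => //.
Qed.

Lemma nbr2 x y u v w : e x y -> u != v -> cn x y = [set u; v] -> e x w ->
  [|| w == y, w == u | w == v].
Proof.
move=> xy uv H xw.
have : u \in cn x y by rewrite H !inE eqxx.
have : v \in cn x y by rewrite H !inE eqxx orbT.
rewrite !incn => /andP[xv yv] /andP[xu yu].
exact: (nb3 xy xu xv (eneq yu) (eneq yv) uv xw).
Qed.

Definition ordc x y u v :=
  (lt u x && lt u y && lt v x && lt v y) || (lt x u && lt y u && lt x v && lt y v).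

Definition M x y := e x y &&
  ([exists u, exists v, (u != v) && (cn x y == [set u; v]) &&
       (~~ e u v || (e u v && ordc x y u v))] ||
   [exists z, (cn x y == [set z]) && (cn x z == [set y]) && (cn y z == [set x])
       && lt x z && lt y z]).

Lemma Mcases x y : M x y -> e x y /\
  ((exists u v, [/\ u != v, cn x y = [set u; v] & ~~ e u v]) \/
   (exists u v, [/\ u != v, cn x y = [set u; v], e u v & ordc x y u v]) \/
   (exists z, [/\ cn x y = [set z], cn x z = [set y], cn y z = [set x], lt x z & lt y z])).
Proof.
case/andP => xy /orP[/existsP[u /existsP[v /andP[/andP[uv /eqP H] /orP[D|/andP[K O]]]]]|
   /existsP[z /andP[/andP[/andP[/andP[/eqP H1 /eqP H2] /eqP H3] l1] l2]]]; split => //.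
- by left; exists u, v.
- by right; left; exists u, v.
- by right; right; exists z.
Qed.

Lemma MD x y u v : e x y -> u != v -> cn x y = [set u; v] -> ~~ e u v -> M x y.
Proof.
move=> xy uv H D; rewrite /M xy /=; apply/orP; left.
by apply/existsP; exists u; apply/existsP; exists v; rewrite uv H eqxx D.
Qed.

Lemma MK x y u v : e x y -> u != v -> cn x y = [set u; v] -> e u v -> ordc x y u v -> M x y.
Proof.
move=> xy uv H K O; rewrite /M xy /=; apply/orP; left.
by apply/existsP; exists u; apply/existsP; exists v; rewrite uv H eqxx K O orbT.
Qed.

Lemma MT x y z : e x y -> cn x y = [set z] -> cn x z = [set y] -> cn y z = [set x] ->
  lt x z -> lt y z -> M x y.
Proof.
move=> xy H1 H2 H3 l1 l2; rewrite /M xy /=; apply/orP; right.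
by apply/existsP; exists z; rewrite H1 H2 H3 !eqxx l1 l2.
Qed.

Lemma b8a (a b c d a' b' c' d' : bool) :
  (a && b && c && d) || (a' && b' && c' && d') = (b && a && d && c) || (b' && a' && d' && c').
Proof. by case: a; case: b; case: c; case: d; case: a'; case: b'; case: c'; case: d'. Qed.
Lemma b8b (a b c d a' b' c' d' : bool) :
  (a && b && c && d) || (a' && b' && c' && d') = (c && d && a && b) || (c' && d' && a' && b').
Proof. by case: a; case: b; case: c; case: d; case: a'; case: b'; case: c'; case: d'. Qed.
Lemma ordcC x y u v : ordc x y u v = ordc y x u v.
Proof. by rewrite /ordc b8a. Qed.
Lemma ordcC2 x y u v : ordc x y u v = ordc x y v u.
Proof. by rewrite /ordc b8b. Qed.

Lemma Msym x y : M x y -> M y x.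
Proof.
case/Mcases => xy [[u [v [uv H D]]]|[[u [v [uv H K O]]]|[z [H1 H2 H3 l1 l2]]]].
- by apply: (MD (u:=u) (v:=v)) => //; [rewrite esym | rewrite cnC].
- by apply: (MK (u:=u) (v:=v)) => //; [rewrite esym | rewrite cnC | rewrite ordcC].
- by apply: (MT (z:=z)) => //; [rewrite esym | rewrite cnC].
Qed.

Lemma MC x y : M x y = M y x.
Proof. by apply/idP/idP => /Msym. Qed.

Lemma Me x y : M x y -> e x y.
Proof. by case/andP. Qed.

Lemma Mcn x y : M x y -> exists w, w \in cn x y.
Proof.
case/Mcases => _ [[u [v [_ H _]]]|[[u [v [_ H _ _]]]|[z [H1 _ _ _ _]]]].
- by exists u; rewrite H !inE eqxx.
- by exists u; rewrite H !inE eqxx.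
- by exists z; rewrite H1 !inE.
Qed.


Lemma ordc_excl x y u v : ordc x y u v -> ordc x u y v -> False.
Proof.
rewrite /ordc /lt.
by move=> /orP[/andP[/andP[/andP[a1 a2] a3] a4]|/andP[/andP[/andP[a1 a2] a3] a4]]
          /orP[/andP[/andP[/andP[b1 b2] b3] b4]|/andP[/andP[/andP[b1 b2] b3] b4]]; lia.
Qed.

Lemma in_cn_set2 x y u v : cn x y = [set u; v] -> (u \in cn x y) && (v \in cn x y).
Proof. by move=> ->; rewrite !inE !eqxx orbT. Qed.

Lemma Mua x y u v : e x y -> u != v -> cn x y = [set u; v] ->
  (~~ e u v \/ (e u v /\ ordc x y u v)) -> ~~ M x u.
Proof.
move=> xy uv H hyp; apply/negP => /Mcases [xu C].
have /andP[] := in_cn_set2 H; rewrite !incn => /andP[_ yu] /andP[xv yv].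
have yin : y \in cn x u by rewrite incn xy esym.
have sub : forall w, w \in cn x u -> w = y \/ (w = v /\ e u v).
  move=> w; rewrite incn => /andP[xw uw].
  case/or3P: (nbr2 xy uv H xw) => /eqP E; subst w.
  - by left.
  - by rewrite eirr in uw.
  - by right.
case: C => [[a [b [ab H2 D]]]|[[a [b [ab H2 K O]]]|[z [H1 H2 H3 l1 l2]]]].
- have /andP[ha hb] := in_cn_set2 H2.
  case: (sub a ha) => [Ea|[Ea _]]; case: (sub b hb) => [Eb|[Eb _]]; subst a b;
    try by rewrite eqxx in ab.
  + by rewrite yv in D.
  + by rewrite esym yv in D.
- have /andP[ha hb] := in_cn_set2 H2.
  case: hyp => [nuv|[_ Ouv]].
  + case: (sub a ha) => [Ea|[_ Hc]]; last by rewrite Hc in nuv.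
    case: (sub b hb) => [Eb|[_ Hc]]; last by rewrite Hc in nuv.
    by move: ab; rewrite Ea Eb eqxx.
  + case: (sub a ha) => [Ea|[Ea _]]; case: (sub b hb) => [Eb|[Eb _]]; subst a b;
      try by rewrite eqxx in ab.
    * exact: (ordc_excl Ouv O).
    * by rewrite ordcC2 in O; exact: (ordc_excl Ouv O).
- have : y \in [set z] by rewrite -H1.
  rewrite inE => /eqP Ey; subst z.
  have : v \in [set u] by rewrite -H2 H !inE eqxx orbT.
  by rewrite inE eq_sym (negbTE uv).
Qed.

Lemma Mub x y z : cn x y = [set z] -> cn x z = [set y] -> lt y z -> ~~ M x z.
Proof.
move=> H1 H2 l; apply/negP => /Mcases [xz C].
case: C => [[a [b [ab H _]]]|[[a [b [ab H _ _]]]|[z' [H1' H2' H3' l1 l2]]]].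
- by move: ab; rewrite (set2_eq1 (etrans (Logic.eq_sym H) H2)) eqxx.
- by move: ab; rewrite (set2_eq1 (etrans (Logic.eq_sym H) H2)) eqxx.
- have : y \in [set z'] by rewrite -H1' H2 inE.
  rewrite inE => /eqP E; subst z'.
  by move: l l2; rewrite /lt; lia.
Qed.

Lemma Muc0 x y y' u v : e x y -> u != v -> cn x y = [set u; v] -> e x y' ->
  y' != y -> e y y'.
Proof.
move=> xy uv H xy' ny.
have /andP[] := in_cn_set2 H; rewrite !incn => /andP[_ yu] /andP[_ yv].
by case/or3P: (nbr2 xy uv H xy') => /eqP E; subst y' => //; rewrite eqxx in ny.
Qed.

Lemma Muc x y y' : M x y -> M x y' -> y != y' -> ~~ e y y' -> False.
Proof.
move=> Mxy Mxy' ny ne.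
have xy := Me Mxy; have xy' := Me Mxy'.
have noDK : forall a b, M x a -> e x b -> b != a -> ~~ e a b ->
    exists z, [/\ cn x a = [set z], cn x z = [set a], cn a z = [set x], lt x z & lt a z].
  move=> a b /Mcases [xa C] xb nba nab.
  case: C => [[u [v [uv H _]]]|[[u [v [uv H _ _]]]|//]].
  - by move: nab; rewrite (Muc0 xa uv H xb nba).
  - by move: nab; rewrite (Muc0 xa uv H xb nba).
have ny' : y' != y by rewrite eq_sym.
have ne' : ~~ e y' y by rewrite esym.
have [z [H1 H2 _ _ _]] := noDK _ _ Mxy xy' ny' ne.
have [z' [H1' _ _ _ _]] := noDK _ _ Mxy' xy ny ne'.
have : z \in cn x y by rewrite H1 inE.
have : z' \in cn x y' by rewrite H1' inE.
rewrite !incn => /andP[xz' yz'] /andP[xz yz].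
have yz0 : y != z by apply: eneq.
have y'z : y' != z by apply: contra ne => /eqP->.
case/or3P: (nb3 xy xy' xz ny yz0 y'z xz') => /eqP E; subst z'.
- by move: ne; rewrite esym yz'.
- by rewrite eirr in yz'.
- have : y' \in cn x z by rewrite incn xy' esym yz'.
  by rewrite H2 inE (negbTE ny').
Qed.

Lemma Muniq x y y' : M x y -> M x y' -> y = y'.
Proof.
move=> Mxy Mxy'; apply/eqP/negP => /negP ny.
have [yy'|nyy'] := boolP (e y y'); last exact: (Muc Mxy Mxy' ny nyy').
have xy := Me Mxy; have xy' := Me Mxy'.
have yin : y' \in cn x y by rewrite incn xy' yy'.
case/Mcases: Mxy => _ [[u [v [uv H D]]]|[[u [v [uv H K O]]]|[z [H1 H2 H3 l1 l2]]]].
- move: yin; rewrite H !inE => /orP[]/eqP E; subst y'.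
  + by move/negP: (Mua xy uv H (or_introl D)).
  + rewrite set2C in H; rewrite eq_sym in uv.
    have D' : ~~ e v u by rewrite esym.
    by move/negP: (Mua xy uv H (or_introl D')).
- move: yin; rewrite H !inE => /orP[]/eqP E; subst y'.
  + by move/negP: (Mua xy uv H (or_intror (conj K O))).
  + rewrite set2C in H; rewrite eq_sym in uv; rewrite ordcC2 in O.
    have K' : e v u by rewrite esym.
    by move/negP: (Mua xy uv H (or_intror (conj K' O))).
- move: yin; rewrite H1 inE => /eqP E; subst y'.
  by move/negP: (Mub H1 H2 l2).
Qed.


Lemma K4cn a b c d : e a b -> e a c -> e a d -> e b c -> e b d -> e c d ->
  cn a b = [set c; d].
Proof.
move=> ab ac ad bc bd cd; apply/setP => w; rewrite incn !inE.
apply/idP/idP.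
- move=> /andP[aw bw].
  have bc' := eneq bc; have bd' := eneq bd; have cd' := eneq cd.
  case/or3P: (nb3 ab ac ad bc' bd' cd' aw) => /eqP E; subst w.
  + by rewrite eirr in bw.
  + by rewrite eqxx.
  + by rewrite eqxx orbT.
- by case/orP => /eqP ->; rewrite ?ac ?ad ?bc ?bd.
Qed.

Lemma ord4 a b c d : a != b -> a != c -> a != d -> b != c -> b != d -> c != d ->
  [|| ordc a b c d, ordc a c b d | ordc b c a d].
Proof.
move=> ab ac ad bc bd cd.
move: (ltneq ab) (ltneq ac) (ltneq ad) (ltneq bc) (ltneq bd) (ltneq cd).
rewrite /ordc /lt.
move: (enum_rank a : nat) (enum_rank b : nat) (enum_rank c : nat) (enum_rank d : nat).
move=> A B C D; lia.
Qed.

Lemma triM x y z : e x y -> e y z -> e x z -> [|| M x y, M y z | M x z].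
Proof.
have gen : forall a b c, e a b -> e b c -> e a c ->
    (exists w, w != c /\ cn a b = [set c; w]) -> [|| M a b, M b c | M a c].
  move=> a b c ab bc ac [w [wc H]].
  have /andP[_] := in_cn_set2 H; rewrite incn => /andP[aw bw].
  have [cw|ncw] := boolP (e c w); last first.
    have cw0 : c != w by rewrite eq_sym.
    by rewrite (MD ab cw0 H ncw).
  have ab' := eneq ab; have ac' := eneq ac; have aw' := eneq aw.
  have bc' := eneq bc; have bw' := eneq bw; have cw' := eneq cw.
  have H2 : cn a c = [set b; w] by apply: K4cn => //; rewrite esym.
  have H3 : cn b c = [set a; w] by apply: K4cn => //; rewrite esym.
  case/or3P: (ord4 ab' ac' aw' bc' bw' cw') => O.
  - by rewrite (MK ab cw' H cw O).
  - by rewrite (MK ac bw' H2 bw O) !orbT.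
  - by rewrite (MK bc aw' H3 aw O) orbT.
move=> xy yz xz.
have zin : z \in cn x y by rewrite incn xz yz.
have yin : y \in cn x z by rewrite incn xy esym yz.
have xin : x \in cn y z by rewrite incn esym xy esym xz.
case: (cn_shape xy zin) => [H1|[w [wz H]]]; last by apply: gen => //; exists w.
case: (cn_shape xz yin) => [H2|[w [wy H]]].
  case: (cn_shape yz xin) => [H3|[w [wx H]]].
    have xy' := eneq xy; have yz' := eneq yz; have xz' := eneq xz.
    have : [|| lt x z && lt y z, lt x y && lt z y | lt y x && lt z x].
      move: (ltneq xy') (ltneq yz') (ltneq xz'); rewrite /lt -!neq_ltn.
      exact: max3.
    case/or3P => /andP[l1 l2].
    - by rewrite (MT xy H1 H2 H3 l1 l2).
    - by rewrite (MT xz H2 H1 (etrans (cnC z y) H3) l1 l2) !orbT.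
    - by rewrite (MT yz H3 (etrans (cnC y x) H1) (etrans (cnC z x) H2) l1 l2) orbT.
  have zx' : e z x by rewrite esym.
  have yx' : e y x by rewrite esym.
  have := gen y z x yz zx' yx' (ex_intro _ w (conj wx H)).
  by rewrite !(MC z) (MC y x); case/or3P => ->; rewrite ?orbT.
have yz' : e z y by rewrite esym.
have := gen x z y xz yz' xy (ex_intro _ w (conj wy H)).
by rewrite !(MC z); case/or3P => ->; rewrite ?orbT.
Qed.


Lemma DU x y u v t : e x y -> u != v -> cn x y = [set u; v] -> ~~ e u v -> ~~ M u t.
Proof.
move=> xy uv H nuv; apply/negP => Mut.
have /andP[] := in_cn_set2 H; rewrite !incn => /andP[xu yu] /andP[xv yv].
have [Ex|nx] := eqVneq t x.
  subst t; move: Mut; rewrite MC; apply/negP; exact: (Mua xy uv H (or_introl nuv)).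
have [Ey|ny] := eqVneq t y.
  subst t; move: Mut; rewrite MC; apply/negP.
  have yx : e y x by rewrite esym.
  by apply: (Mua yx uv _ (or_introl nuv)); rewrite cnC.
have [w' w'in] := Mcn Mut; move: w'in; rewrite incn => /andP[uw tw].
have ux : e u x by rewrite esym. have uy : e u y by rewrite esym.
have ut := Me Mut.
have xy' := eneq xy.
have xt0 : x != t by rewrite eq_sym.
have yt0 : y != t by rewrite eq_sym.
case/or3P: (nb3 ux uy ut xy' xt0 yt0 uw) => /eqP E; subst w'.
- have xt : e x t by rewrite esym.
  case/or3P: (nbr2 xy uv H xt) => /eqP E; subst t.
  + by rewrite eqxx in ny.
  + by rewrite eirr in ut.
  + by rewrite ut in nuv.
- have yx : e y x by rewrite esym.
  have yt : e y t by rewrite esym.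
  have H' : cn y x = [set u; v] by rewrite cnC.
  case/or3P: (nbr2 yx uv H' yt) => /eqP E; subst t.
  + by rewrite eqxx in nx.
  + by rewrite eirr in ut.
  + by rewrite ut in nuv.
- by rewrite eirr in tw.
Qed.

Lemma TU x y z t : cn x y = [set z] -> cn x z = [set y] -> cn y z = [set x] ->
  lt x z -> lt y z -> e x y -> ~~ M z t.
Proof.
move=> H1 H2 H3 l1 l2 xy; apply/negP => Mzt.
have : z \in cn x y by rewrite H1 inE.
rewrite incn => /andP[xz yz].
have [Ex|nx] := eqVneq t x.
  subst t; move: Mzt; rewrite MC; apply/negP; exact: (Mub H1 H2 l2).
have [Ey|ny] := eqVneq t y.
  subst t; move: Mzt; rewrite MC; apply/negP.
  by apply: (Mub (y:=x)) => //; rewrite cnC.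
have [w' w'in] := Mcn Mzt; move: w'in; rewrite incn => /andP[zw tw].
have zx : e z x by rewrite esym. have zy : e z y by rewrite esym.
have zt := Me Mzt.
have xy' := eneq xy.
have xt : x != t by rewrite eq_sym.
have yt : y != t by rewrite eq_sym.
case/or3P: (nb3 zx zy zt xy' xt yt zw) => /eqP E; subst w'.
- have : t \in cn x z by rewrite incn esym tw zt.
  by rewrite H2 inE (negbTE ny).
- have : t \in cn y z by rewrite incn esym tw zt.
  by rewrite H3 inE (negbTE nx).
- by rewrite eirr in tw.
Qed.

Lemma Mwit x y : M x y ->
  (exists u v, [/\ u != v, cn x y = [set u; v] & e u v]) \/
  (forall w, w \in cn x y -> forall t, ~~ M w t).
Proof.
case/Mcases => xy [[u [v [uv H D]]]|[[u [v [uv H K O]]]|[z [H1 H2 H3 l1 l2]]]].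
- right => w; rewrite H !inE => /orP[]/eqP-> t.
  + exact: (DU t xy uv H D).
  + have vu : v != u by rewrite eq_sym.
    have D' : ~~ e v u by rewrite esym.
    by apply: (DU t xy vu _ D'); rewrite set2C.
- by left; exists u, v.
- right => w; rewrite H1 inE => /eqP-> t.
  exact: (TU t H1 H2 H3 l1 l2 xy).
Qed.

Lemma K4comp a b c d : e a b -> e a c -> e a d -> e b c -> e b d -> e c d ->
  has_K4_component e.
Proof.
move=> ab ac ad bc bd cd.
have ba : e b a by rewrite esym. have ca : e c a by rewrite esym.
have da : e d a by rewrite esym. have cb : e c b by rewrite esym.
have db : e d b by rewrite esym. have dc : e d c by rewrite esym.
set Q := [set a; b; c; d].
have adjQ : forall p q, p \in Q -> q \in Q -> p != q -> e p q.
  move=> p q; rewrite !inE -!orbA => /or4P[]/eqP-> /or4P[]/eqP->;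
  by rewrite ?eqxx // ?ab ?ac ?ad ?bc ?bd ?cd ?ba ?ca ?da ?cb ?db ?dc.
have NQ : forall q r, q \in Q -> e q r -> r \in Q.
  move=> q r; rewrite !inE -!orbA => /or4P[]/eqP-> qr.
  - have := nb3 ab ac ad (eneq bc) (eneq bd) (eneq cd) qr.
    by case/or3P => ->; rewrite ?orbT.
  - have := nb3 ba bc bd (eneq ac) (eneq ad) (eneq cd) qr.
    by case/or3P => ->; rewrite ?orbT.
  - have := nb3 ca cb cd (eneq ab) (eneq ad) (eneq bd) qr.
    by case/or3P => ->; rewrite ?orbT.
  - have := nb3 da db dc (eneq ab) (eneq ac) (eneq bc) qr.
    by case/or3P => ->; rewrite ?orbT.
have aQ : a \in Q by rewrite !inE eqxx.
have compQ : component e a = Q.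
  apply/setP => r; rewrite inE; apply/idP/idP.
  - move=> con.
    have cl : closed e (mem Q).
      move=> x y xy; apply/idP/idP => [xQ|yQ]; first exact: NQ xy.
      by apply: (NQ y) => //; rewrite esym.
    by rewrite -(closed_connect cl con).
  - move=> rQ; have [->|nr] := eqVneq a r; first exact: connect0.
    by apply: connect1; apply: adjQ.
exists a; rewrite compQ; split; last exact: adjQ.
have -> : #|Q| = #|[:: a; b; c; d]| by apply: eq_card => x; rewrite !inE -!orbA.
apply/card_uniqP; rewrite /= !inE !negb_or.
by rewrite (eneq ab) (eneq ac) (eneq ad) (eneq bc) (eneq bd) (eneq cd).
Qed.


Definition matched x := [exists y, M x y].
Definition p x := odflt x [pick y | M x y].

Lemma pM x : matched x -> M x (p x).
Proof.
rewrite /p; case: pickP => [y //|H] /existsP[y Hy].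
by move: (H y) Hy => /= ->.
Qed.
Lemma pU x : ~~ matched x -> p x = x.
Proof.
rewrite /p; case: pickP => [y Hy|//] /existsP H.
by case: H; exists y.
Qed.
Lemma Mmatched x y : M x y -> matched x.
Proof. by move=> H; apply/existsP; exists y. Qed.
Lemma pE x y : M x y -> p x = y.
Proof. by move=> H; apply: Muniq (pM (Mmatched H)) H. Qed.
Lemma ppx x : p (p x) = x.
Proof.
have [m|u] := boolP (matched x); last by rewrite !pU.
by apply: pE; rewrite MC; apply: pM.
Qed.
Lemma matchedp x : matched (p x) = matched x.
Proof.
have [m|u] := boolP (matched x); last by rewrite pU // (negbTE u).
by apply: (Mmatched (y:=x)); rewrite MC; apply: pM.
Qed.
Lemma pneq x : matched x -> p x != x.
Proof. by move/pM/Me/eneq; rewrite eq_sym. Qed.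
Lemma p_inj : injective p.
Proof. exact: (can_inj ppx). Qed.

Definition f x := if lt (p x) x then p x else x.
Definition col x : nat := enum_rank (f x).

Lemma f_in x : f x = x \/ f x = p x.
Proof. by rewrite /f; case: ifP; [right|left]. Qed.
Lemma fp x : f (p x) = f x.
Proof.
have [m|u] := boolP (matched x); last by rewrite pU.
rewrite /f ppx.
have asy : forall a b, lt a b -> lt b a = false.
  by move=> a b; rewrite /lt => H; apply/negbTE; rewrite -leqNgt ltnW.
by have := ltneq (pneq m); case/orP => H; rewrite H (asy _ _ H).
Qed.
Lemma ff x : f (f x) = f x.
Proof. by have [E|E] := f_in x; rewrite {1}E ?fp. Qed.
Lemma f_matched x : matched x -> f x != x -> f x = p x.
Proof. by case: (f_in x) => -> //; rewrite eqxx. Qed.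

Lemma colM x y z : M x y -> e y z -> e x z -> col x = col y /\ col z != col x.
Proof.
move=> Mxy yz xz.
have py : p x = y := pE Mxy.
have px : p y = x by rewrite -py ppx.
have fxy : f x = f y by rewrite -py fp.
split; first by rewrite /col fxy.
apply/negP => /eqP /val_inj /enum_rank_inj E.
have zx : z != x by rewrite eq_sym; apply: eneq.
have zy : z != y by rewrite eq_sym; apply: eneq.
have nm : forall w, ~~ matched w -> p w = w by move=> w; exact: pU.
case: (f_in x) => Ex; case: (f_in z) => Ez; rewrite Ex Ez ?py in E.
- by rewrite E eqxx in zx.
- have mz : matched z by apply: contraTT zx => /nm Hp; rewrite -Hp E eqxx.
  have := pM mz; rewrite E MC => H.
  by move: zy; rewrite (Muniq H Mxy) eqxx.
- by rewrite E eqxx in zy.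
- have mz : matched z by apply: contraTT zy => /nm Hp; rewrite -Hp E eqxx.
  have := pM mz; rewrite E MC => H.
  have H' : M y x by rewrite MC.
  by move: zx; rewrite (Muniq H H') eqxx.
Qed.

Lemma tri_elems t : triangle e t -> exists x y z, [/\ t = [set x; y; z], e x y, e y z & e x z].
Proof.
case=> c3 adj.
have [x xt] : exists x, x \in t by apply/card_gt0P; rewrite c3.
have : #|t :\ x| == 2 by move: (cardsD1 x t); rewrite xt c3 add1n => -[<-].
case/cards2P => y [z [yz H]].
have : y \in t :\ x by rewrite H !inE eqxx.
have : z \in t :\ x by rewrite H !inE eqxx orbT.
rewrite !inE => /andP[zx zt] /andP[yx yt].
exists x, y, z; split.
- by rewrite -setUA -H setD1K.
- by apply: adj => //; rewrite eq_sym.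
- exact: adj.
- by apply: adj => //; rewrite eq_sym.
Qed.

Lemma undup_aab (a b : nat) : b != a -> size (undup [:: a; a; b]) = 2.
Proof. move=> ba; rewrite /= !inE eqxx /=; by rewrite eq_sym (negbTE ba). Qed.
Lemma undup_baa (a b : nat) : b != a -> size (undup [:: b; a; a]) = 2.
Proof. move=> ba; rewrite /= !inE (negbTE ba) /=. rewrite ?inE ?eqxx //. Qed.
Lemma undup_aba (a b : nat) : b != a -> size (undup [:: a; b; a]) = 2.
Proof. move=> ba; rewrite /= !inE eqxx orbT /=. rewrite ?inE (negbTE ba) //. Qed.

Lemma col_WORM : K3_WORM e col.
Proof.
move=> t /tri_elems [x [y [z [-> xy yz xz]]]].
rewrite (@ncol_seq _ col _ [:: x; y; z]); last by move=> w; rewrite !inE orbA.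
rewrite /=.
have yx : e y x by rewrite esym. have zy : e z y by rewrite esym.
have zx : e z x by rewrite esym.
case/or3P: (triM xy yz xz) => H.
- by case: (colM H yz xz) => -> /undup_aab.
- by case: (colM H zx yx) => -> /undup_baa.
- by case: (colM H zy xy) => -> /undup_aba.
Qed.


Definition Am := [set x | matched x].
Definition Reps := [set x | f x == x].

Lemma ncol_col : (ncolors col) * 2 = #|T| + #|~: Am|.
Proof.
have h1 : ncolors col = #|Reps|.
  rewrite /ncolors /ncolors_on.
  have -> : [seq col x | x <- enum [set: T]] =
            [seq (nat_of_ord (enum_rank r)) | r <- [seq f x | x <- enum [set: T]]].
    by rewrite -map_comp.
  have ri : injective (fun r : T => nat_of_ord (enum_rank r)).
    by move=> a b /val_inj/enum_rank_inj.
  rewrite (undup_map_inj ri) size_map.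
  move/card_uniqP: (undup_uniq [seq f x | x <- enum [set: T]]) => <-.
  apply: eq_card => x; rewrite mem_undup inE; apply/mapP/idP.
  - by case=> y _ ->; rewrite ff.
  - by move/eqP => E; exists x; rewrite ?mem_enum ?inE.
have h2 := cardsID Am Reps.
have h3 : Reps :\: Am = ~: Am.
  apply/setP => x; rewrite in_setD !inE; apply/andb_idr => /pU px.
  by rewrite /f px; case: ifP.
have h4 := cardsID Reps Am.
have h5 : Am :\: Reps = p @: (Am :&: Reps).
  apply/setP => x; rewrite in_setD !inE; apply/andP/imsetP.
  - case=> nf m; exists (p x); last by rewrite ppx.
    rewrite !inE matchedp m /= fp.
    by rewrite (f_matched m nf) eqxx.
  - case=> y; rewrite !inE => /andP[m /eqP fy] ->.
    rewrite matchedp m fp fy; split => //.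
    by rewrite eq_sym pneq.
rewrite h5 (card_imset _ p_inj) setIC in h4.
have h6 := cardsC Am.
rewrite h3 in h2; lia.
Qed.

Definition R w x := matched x && (w \in cn x (p x)).

Lemma cardsum (P : pred T) : #|[set w | P w]| = \sum_w (P w : nat).
Proof.
rewrite -sum1dep_card big_mkcond; apply: eq_bigr => w _; by case: (P w).
Qed.

Lemma dbl : \sum_x #|[set w | R w x]| = \sum_w #|[set x | R w x]|.
Proof.
rewrite (eq_bigr (fun x => \sum_w (R w x : nat))); last by move=> x _; exact: cardsum.
rewrite exchange_big; apply: eq_bigr => w _; by rewrite cardsum.
Qed.

Lemma RA x : matched x -> [set w | R w x] = cn x (p x).
Proof. by move=> m; apply/setP => w; rewrite inE /R m. Qed.
Lemma RU x : ~~ matched x -> [set w | R w x] = set0.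
Proof. by move=> m; apply/setP => w; rewrite !inE /R (negbTE m). Qed.

Lemma pair_unique w a b : R w a -> R w b -> b = a \/ b = p a.
Proof.
case/andP => ma; rewrite incn => /andP[aw paw].
case/andP => mb; rewrite incn => /andP[bw pbw].
have [->|ba] := eqVneq b a; first by left.
have [->|bpa] := eqVneq b (p a); first by right.
have wa : e w a by rewrite esym. have wpa : e w (p a) by rewrite esym.
have wb : e w b by rewrite esym. have wpb : e w (p b) by rewrite esym.
have apa : a != p a by rewrite eq_sym pneq.
have ab : a != b by rewrite eq_sym.
have pab : p a != b by rewrite eq_sym.
case/or3P: (nb3 wa wpa wb apa ab pab wpb) => /eqP E.
- by move: bpa; rewrite -E ppx eqxx.
- by move: ba; rewrite (p_inj E) eqxx.
- by move: (pneq mb); rewrite E eqxx.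
Qed.

Lemma cntU_le w : #|[set x | R w x]| <= 2.
Proof.
have [a ain|none] := pickP (fun x => R w x); last first.
  rewrite (_ : [set x | R w x] = set0) ?cards0 //.
  by apply/setP => x; rewrite !inE none.
apply: (@leq_trans #|[set a; p a]|); last by rewrite cards2; case: (a != p a).
apply: subset_leq_card; apply/subsetP => x; rewrite inE => Rx.
by case: (pair_unique ain Rx) => ->; rewrite !inE eqxx ?orbT.
Qed.

Lemma R_unm (nK : ~ has_K4_component e) w x : R w x -> ~~ matched w.
Proof.
case/andP => m win.
case: (Mwit (pM m)) => [[u [v [uv H uvE]]]|H]; last first.
  by apply/existsP => -[t]; apply/negP; exact: H.
have /andP[] := in_cn_set2 H; rewrite !incn => /andP[xu pu] /andP[xv pv].
case: nK; exact: (K4comp (Me (pM m)) xu xv pu pv uvE).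
Qed.

Lemma sumA_ge : \sum_x (x \in Am : nat) <= \sum_x #|[set w | R w x]|.
Proof.
apply: leq_sum => x _; rewrite inE.
have [m|u] := boolP (matched x) => //=.
rewrite RA //; have [w win] := Mcn (pM m); apply/card_gt0P; by exists w.
Qed.

Lemma sumU_le (nK : ~ has_K4_component e) :
  \sum_w #|[set x | R w x]| <= \sum_w ((w \in ~: Am : nat) + (w \in ~: Am : nat)).
Proof.
apply: leq_sum => w _; rewrite !inE.
have [m|u] := boolP (matched w) => /=.
  rewrite (_ : [set x | R w x] = set0) ?cards0 //.
  apply/setP => x; rewrite !inE; apply/negP => /(R_unm nK); by rewrite m.
exact: cntU_le.
Qed.

Lemma sum_eq_pt (F G : T -> nat) : (forall x, F x <= G x) ->
  \sum_x G x <= \sum_x F x -> forall x, F x = G x.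
Proof.
move=> H Hle x.
have L := @leqif_sum T predT (fun x => F x == G x) F G (fun x _ => leqif_eq (H x)).
case: L => L1 L2.
have : (\sum_x F x == \sum_x G x) by rewrite eqn_leq L1 Hle.
by rewrite L2 => /forallP/(_ x)/implyP/(_ isT)/eqP.
Qed.

Lemma sum_card (B : {set T}) : \sum_x (x \in B : nat) = #|B|.
Proof. by rewrite -sum1_card [RHS]big_mkcond /=; apply: eq_bigr => x _; case: (x \in B). Qed.

Lemma cn_tri x y z : cn x y = [set z] -> cn x z = [set y] -> cn y z = [set x] ->
  forall a b, a \in [set x; y; z] -> b \in [set x; y; z] -> a != b ->
  cn a b \subset [set x; y; z].
Proof.
move=> H1 H2 H3 a b; rewrite !inE -!orbA.
move=> /or3P[]/eqP-> /or3P[]/eqP->; rewrite ?eqxx // => _; rewrite ?(cnC y x) ?(cnC z x) ?(cnC z y) ?H1 ?H2 ?H3;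
  apply/subsetP => w; rewrite !inE => ->; by rewrite ?orbT.
Qed.

Lemma paired2 (tp : triangles_paired e) x : matched x -> #|cn x (p x)| = 2.
Proof.
move=> m; case/Mcases: (pM m) => xy [[u [v [uv H _]]]|[[u [v [uv H _ _]]]|[z [H1 H2 H3 l1 l2]]]].
- by rewrite H cards2 uv.
- by rewrite H cards2 uv.
set y := p x in xy H1 H2 H3 l2 *.
have : z \in cn x y by rewrite H1 inE.
rewrite incn => /andP[xz yz].
set t := [set x; y; z].
have tt : triangle e t.
  split; first by rewrite card3 ?(eneq xy) ?(eneq xz) ?(eneq yz).
  move=> a b; rewrite !inE -!orbA => /or3P[]/eqP-> /or3P[]/eqP->;
  by rewrite ?eqxx // ?xy ?xz ?yz ?(esym y x) ?(esym z x) ?(esym z y) ?xy ?xz ?yz.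
case: (tp t tt) => t' [[c3 adj] [nt c2]].
have [a ain] : exists a, a \in t :&: t' by apply/card_gt0P; lia.
have [b bin] : exists b, b \in (t :&: t') :\ a.
  apply/card_gt0P; move: (cardsD1 a (t :&: t')); rewrite ain; lia.
move: bin; rewrite in_setD1 => /andP[ba bin].
move: ain bin; rewrite !in_setI => /andP[ia ia'] /andP[ib ib'].
have [c ct' cnt] : exists2 c, c \in t' & c \notin t.
  apply/subsetPn; apply: contra nt => sub.
  by rewrite eqEcard sub c3 /t card3 ?(eneq xy) ?(eneq xz) ?(eneq yz).
have ac : a != c by apply: contraNneq cnt => <-.
have bc : b != c by apply: contraNneq cnt => <-.
have ab : a != b by rewrite eq_sym.
have cin : c \in cn a b by rewrite incn (adj a c ia' ct' ac) (adj b c ib' ct' bc).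
have := subsetP (cn_tri H1 H2 H3 ia ib ab) c cin.
by rewrite (negbTE cnt).
Qed.


Definition r x := if matched x then f x else if [pick z | R x z] is Some z then f z else x.
Definition Lf b := [:: b, p b & enum (cn b (p b))].
Definition L x := Lf (r x).

Lemma cn_f a : cn (f a) (p (f a)) = cn a (p a).
Proof. by case: (f_in a) => ->; rewrite ?ppx // cnC. Qed.
Lemma m_f a : matched a -> matched (f a).
Proof. by case: (f_in a) => ->; rewrite ?matchedp. Qed.
Lemma mem_Lf a y : (y \in Lf (f a)) = [|| y == a, y == p a | y \in cn a (p a)].
Proof.
rewrite /Lf !inE ?mem_enum cn_f.
by case: (f_in a) => E; rewrite E ?ppx incn // orbCA.
Qed.

Section Cov.
Hypothesis nK : ~ has_K4_component e.
Hypothesis cov : forall w, ~~ matched w -> exists z, R w z.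

Lemma r_rep x : exists a, [/\ matched a, r x = f a & [|| x == a, x == p a | x \in cn a (p a)]].
Proof.
rewrite /r; have [m|u] := boolP (matched x).
  by exists x; rewrite m eqxx.
case: pickP => [z Rz|none].
  by exists z; case/andP: Rz => mz win; rewrite mz win !orbT.
by have [z Rz] := cov u; move: (none z); rewrite Rz.
Qed.

Lemma r_f a y : matched a -> y \in Lf (f a) -> r y = f a.
Proof.
move=> m; rewrite mem_Lf => /or3P[/eqP->|/eqP->|yin].
- by rewrite /r m.
- by rewrite /r matchedp m fp.
- have Ry : R y a by rewrite /R m yin.
  have uy := R_unm nK Ry.
  rewrite /r (negbTE uy); case: pickP => [z Rz|none]; last by move: (none a); rewrite Ry.
  by case: (pair_unique Ry Rz) => ->; rewrite ?fp.
Qed.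

Lemma L_in x : x \in L x.
Proof. by have [a [m E H]] := r_rep x; rewrite /L E mem_Lf H. Qed.
Lemma L_cl x y : y \in L x -> L y = L x.
Proof. by have [a [m E _]] := r_rep x; rewrite /L E => yin; rewrite (r_f m yin). Qed.
Lemma r_m x : matched (r x).
Proof. by have [a [m -> _]] := r_rep x; apply: m_f. Qed.
Lemma L_uniq x : uniq (L x).
Proof.
rewrite /L /Lf /=; have mb := r_m x; set b := r x in mb *.
rewrite /= ?inE ?mem_enum ?incn ?eirr /= ?andbF ?orbF ?enum_uniq ?andbT.
by rewrite eq_sym pneq.
Qed.
Lemma L_size x : size (L x) = (#|cn (r x) (p (r x))|).+2.
Proof. by rewrite /L /Lf /= cardE. Qed.

Lemma good3 (card1 : forall b, matched b -> #|cn b (p b)| = 1) x0 x (i j : 'I_3) :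
  i != j -> e (nth x0 (L x) i) (nth x0 (L x) j).
Proof.
have mb := r_m x; rewrite /L /Lf; set b := r x in mb *.
have c1 := card1 _ mb; rewrite cardE in c1.
have bp := Me (pM mb).
case E: (enum (cn b (p b))) c1 => [|z [|? ?]] //= _.
have : z \in cn b (p b) by rewrite -mem_enum E inE.
rewrite incn => /andP[bz pz].
have pb : e (p b) b by rewrite esym. have zb : e z b by rewrite esym.
have zp : e z (p b) by rewrite esym.
case: (o3 i) => ->; case: (o3 j) => ->; rewrite ?eqxx // !inordK //.
Qed.

Lemma good4 (card2 : forall b, matched b -> #|cn b (p b)| = 2) x0 x (i j : 'I_4) :
  i != j -> ~~ ((val i == 2) && (val j == 3) || (val i == 3) && (val j == 2)) ->
  e (nth x0 (L x) i) (nth x0 (L x) j).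
Proof.
have mb := r_m x; rewrite /L /Lf; set b := r x in mb *.
have c2 := card2 _ mb; rewrite cardE in c2.
have bp := Me (pM mb).
case E: (enum (cn b (p b))) c2 => [|z [|z' [|? ?]]] //= _.
have : z \in cn b (p b) by rewrite -mem_enum E inE eqxx.
have : z' \in cn b (p b) by rewrite -mem_enum E !inE eqxx orbT.
rewrite !incn => /andP[bz' pz'] /andP[bz pz].
have pb : e (p b) b by rewrite esym. have zb : e z b by rewrite esym.
have zp : e z (p b) by rewrite esym. have zb' : e z' b by rewrite esym.
have zp' : e z' (p b) by rewrite esym.
case: (o4 i) => ->; case: (o4 j) => ->; rewrite ?eqxx // !inordK //.
Qed.

End Cov.

Lemma tri_col c : K3_WORM e c -> forall a b d, e a b -> e a d -> e b d ->
  size (undup [:: c a; c b; c d]) = 2.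
Proof.
move=> W a b d ab ad bd.
have tt : triangle e [set a; b; d].
  split; first by rewrite card3 ?(eneq ab) ?(eneq ad) ?(eneq bd).
  have ba : e b a by rewrite esym. have da : e d a by rewrite esym.
  have db : e d b by rewrite esym.
  move=> u v; rewrite !inE -!orbA => /or3P[]/eqP-> /or3P[]/eqP->; by rewrite ?eqxx.
have := W _ tt; rewrite (@ncol_seq _ c _ [:: a; b; d]) //.
by move=> w; rewrite !inE orbA.
Qed.

Lemma K3block c (q : 'I_3 -> T) : K3_WORM e c ->
  (forall j j', j != j' -> e (q j) (q j')) ->
  size (undup [seq c (q j) | j <- enum 'I_3]) <= 2.
Proof.
move=> W adj.
have n01 : (inord 0 : 'I_3) != inord 1 by apply/eqP => /(congr1 (@nat_of_ord 3)); rewrite !inordK.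
have n02 : (inord 0 : 'I_3) != inord 2 by apply/eqP => /(congr1 (@nat_of_ord 3)); rewrite !inordK.
have n12 : (inord 1 : 'I_3) != inord 2 by apply/eqP => /(congr1 (@nat_of_ord 3)); rewrite !inordK.
apply: (leq_trans _ (eq_leq (tri_col W (adj _ _ n01) (adj _ _ n02) (adj _ _ n12)))).
apply: undup_size_le => w /mapP[j _ ->]; rewrite mem_undup.
by case: (o3 j) => ->; rewrite !inE eqxx ?orbT.
Qed.

Lemma K4block c (q : 'I_4 -> T) : K3_WORM e c ->
  (forall j j', j != j' -> e (q j) (q j')) ->
  size (undup [seq c (q j) | j <- enum 'I_4]) <= 2.
Proof.
move=> W adj.
have nn : forall a b, a < 4 -> b < 4 -> a != b -> (inord a : 'I_4) != inord b.
  by move=> a b ha hb ab; apply/eqP => /(congr1 (@nat_of_ord 4)); rewrite !inordK //; apply/eqP.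
have ad : forall a b, a < 4 -> b < 4 -> a != b -> e (q (inord a)) (q (inord b)).
  by move=> a b ha hb ab; apply: adj; apply: nn.
rewrite (@undup_size_eq _ _ [:: c (q (inord 0)); c (q (inord 1)); c (q (inord 2)); c (q (inord 3))]).
  by apply: nat4; apply: tri_col => //; apply: ad.
move=> w; apply/mapP/idP.
- by case=> j _ ->; case: (o4 j) => ->; rewrite !inE eqxx ?orbT.
- by rewrite !inE => /or4P[]/eqP->; eexists; rewrite ?mem_enum.
Qed.

Lemma Kmblock c (q : 'I_4 -> T) : K3_WORM e c ->
  e (q (inord 0)) (q (inord 1)) -> e (q (inord 0)) (q (inord 2)) -> e (q (inord 1)) (q (inord 2)) ->
  size (undup [seq c (q j) | j <- enum 'I_4]) <= 3.
Proof.
move=> W e01 e02 e12.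
apply: (@leq_trans (size (undup [:: c (q (inord 0)); c (q (inord 1)); c (q (inord 2))] ++ [:: c (q (inord 3))]))).
  apply: undup_size_le => w /mapP[j _ ->]; rewrite mem_cat mem_undup.
  by case: (o4 j) => ->; rewrite !inE eqxx ?orbT.
by rewrite size_cat (tri_col W e01 e02 e12).
Qed.

Definition NB x := [set y | (y == x) || e x y].

Lemma NB_K4 a b c d : e a b -> e a c -> e a d -> e b c -> e b d -> e c d ->
  forall q, q \in [set a; b; c; d] -> NB q = [set a; b; c; d].
Proof.
move=> ab ac ad bc bd cd.
have ba : e b a by rewrite esym. have ca : e c a by rewrite esym.
have da : e d a by rewrite esym. have cb : e c b by rewrite esym.
have db : e d b by rewrite esym. have dc : e d c by rewrite esym.
set Q := [set a; b; c; d].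
have adjQ : forall p q, p \in Q -> q \in Q -> p != q -> e p q.
  move=> p q; rewrite !inE -!orbA => /or4P[]/eqP-> /or4P[]/eqP->;
  by rewrite ?eqxx // ?ab ?ac ?ad ?bc ?bd ?cd ?ba ?ca ?da ?cb ?db ?dc.
have c4 : #|Q| = 4.
  have -> : #|Q| = #|[:: a; b; c; d]| by apply: eq_card => x; rewrite !inE -!orbA.
  apply/card_uniqP; rewrite /= !inE !negb_or.
  by rewrite (eneq ab) (eneq ac) (eneq ad) (eneq bc) (eneq bd) (eneq cd).
move=> q qQ; apply/eqP; rewrite eq_sym eqEcard; apply/andP; split.
  apply/subsetP => w wQ; rewrite inE; have [->|nw] := eqVneq w q => //=.
  by apply: adjQ; rewrite // eq_sym.
rewrite c4.
have -> : NB q = q |: N q by apply/setP => w; rewrite !inE.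
rewrite cardsU1 (_ : 4 = 1 + 3) //; apply: leq_add; first by case: (q \notin N q).
exact: edeg.
Qed.


Lemma ptA x : (x \in Am : nat) <= #|[set w | R w x]|.
Proof.
rewrite inE; have [m|u] := boolP (matched x) => //=.
rewrite RA //; have [w win] := Mcn (pM m); apply/card_gt0P; by exists w.
Qed.

Lemma ptU (nK : ~ has_K4_component e) w :
  #|[set x | R w x]| <= (w \in ~: Am : nat) + (w \in ~: Am : nat).
Proof.
rewrite !inE; have [m|u] := boolP (matched w) => /=.
  rewrite (_ : [set x | R w x] = set0) ?cards0 //.
  apply/setP => x; rewrite !inE; apply/negP => /(R_unm nK); by rewrite m.
exact: cntU_le.
Qed.

Lemma ptA2 (tp : triangles_paired e) x :
  (x \in Am : nat) + (x \in Am : nat) <= #|[set w | R w x]|.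
Proof.
rewrite inE; have [m|u] := boolP (matched x) => //=.
by rewrite RA // paired2.
Qed.

Definition LK x := enum (NB x).

Lemma main_sec (x0 : T) (k : nat) : Wplus_K3 e k ->
  (#|T| <= 2 * k /\
   (2 * k = #|T| <->
    exists m, 4 * m = #|T| /\ isomorphic e (copies m K4))) /\
  (~ has_K4_component e ->
   #|T| * 2 <= 3 * k /\
   (3 * k = #|T| * 2 <->
    exists m, 3 * m = #|T| /\ contains_subgraph e (copies m K3))) /\
  (~ has_K4_component e -> triangles_paired e ->
   #|T| * 3 <= 4 * k /\
   (4 * k = #|T| * 3 <->
    exists m, 4 * m = #|T| /\ contains_subgraph e (copies m K4_minus_e))).
Proof.
case=> [[c0 [Wc0 kc0]] kmax].
have kge := kmax col col_WORM.
have cnt := ncol_col.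
have nA := cardsC Am.
have h1 : #|Am| <= \sum_x #|[set w | R w x]|.
  by rewrite -sum_card; apply: leq_sum => x _; exact: ptA.
have h3 := dbl.
split; [|split].
-
  split; first lia.
  split.
  + move=> k2.
    have s0 : #|~: Am| = 0 by lia.
    have allm : forall x, matched x.
      move=> x; have [//|u] := boolP (matched x).
      have : x \in ~: Am by rewrite in_setC in_set.
      by rewrite (cards0_eq s0) inE.
    have K4at : forall x, exists u v, [/\ u != v, cn x (p x) = [set u; v] & e u v].
      move=> x; case: (Mwit (pM (allm x))) => // H.
      have [w win] := Mcn (pM (allm x)).
      by move: (allm w) => /existsP[t Mt]; move: (H w win t); rewrite Mt.
    have NBQ : forall x, exists Q, NB x = Q /\ forall y, y \in Q -> NB y = Q.
      move=> x; have [u [v [uv H uvE]]] := K4at x.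
      have /andP[] := in_cn_set2 H; rewrite !incn => /andP[xu pu] /andP[xv pv].
      have xp := Me (pM (allm x)).
      have NQ := NB_K4 xp xu xv pu pv uvE.
      exists [set x; p x; u; v]; split => //.
      by apply: NQ; rewrite !inE eqxx.
    have hNB : forall x y, y \in NB x -> NB y = NB x.
      by move=> x y; have [Q [-> HQ]] := NBQ x; apply: HQ.
    have hNB4 : forall x, #|NB x| = 4.
      move=> x; have [u [v [uv H uvE]]] := K4at x.
      have /andP[] := in_cn_set2 H; rewrite !incn => /andP[xu pu] /andP[xv pv].
      have xp := Me (pM (allm x)).
      rewrite (NB_K4 xp xu xv pu pv uvE) ?inE ?eqxx //.
      have -> : #|[set x; p x; u; v]| = #|[:: x; p x; u; v]|.
        by apply: eq_card => w; rewrite !inE -!orbA.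
      apply/card_uniqP; rewrite /= !inE !negb_or.
      by rewrite (eneq xp) (eneq xu) (eneq xv) (eneq pu) (eneq pv) (eneq uvE).
    have Lin : forall x, x \in LK x by move=> x; rewrite /LK mem_enum inE eqxx.
    have Lcl : forall x y, y \in LK x -> LK y = LK x.
      by move=> x y; rewrite /LK mem_enum => /hNB ->.
    have Lu : forall x, uniq (LK x) by move=> x; exact: enum_uniq.
    have Ls : forall x, size (LK x) = 3.+1 by move=> x; rewrite /LK -cardE hNB4.
    have [m [g [gb mE E1 E2]]] := blocks x0 Lin Lcl Lu Ls.
    exists m; split; first lia.
    exists g; split => // x y.
    rewrite /copies /K4 E1.
    have Lc : (LK x == LK y) = (NB x == NB y).
      apply/eqP/eqP => [H|E]; last by rewrite /LK E.
      by apply/setP => w; rewrite -[w \in NB x]mem_enum -[w \in NB y]mem_enum -/(LK x) -/(LK y) H.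
    rewrite Lc.
    case exy: (e x y).
    * have yin : y \in NB x by rewrite inE exy orbT.
      rewrite (hNB _ _ yin) eqxx andTb; symmetry; apply/negP => /eqP E.
      have xy : x = y by rewrite -(E2 x) -(E2 y) E /LK (hNB _ _ yin).
      by rewrite xy eirr in exy.
    * symmetry; apply/negP => /andP[/eqP NBxy ne].
      have : y \in NB x by rewrite NBxy inE eqxx.
      rewrite inE exy orbF => /eqP yx.
      by rewrite yx eqxx in ne.
  + case=> m [n4 [g [gb gE]]].
    case: gb => h gh hg.
    have := @ub _ c0 m 4 2 h (fun x => ex_intro _ (g x) (gh x)).
    have bb : forall i, size (undup [seq c0 (h (i, j)) | j <- enum 'I_4]) <= 2.
      move=> i; apply: (K4block (q := fun j => h (i, j))) => // j j' jj.
      by rewrite gE !hg /copies /K4 /= eqxx jj.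
    move/(_ bb); rewrite kc0 => kb; lia.
-
  move=> nK.
  have h2 := sumU_le nK.
  rewrite big_split /= sum_card in h2.
  split; first lia.
  split.
  + move=> k3.
    have pA := sum_eq_pt (fun x => ptA x).
    have pU := sum_eq_pt (fun w => ptU nK w).
    rewrite sum_card in pA; rewrite big_split /= sum_card in pU.
    have card1 : forall b, matched b -> #|cn b (p b)| = 1.
      have sA : \sum_x #|[set w | R w x]| <= #|Am| by lia.
      move=> b mb; have := pA sA b; rewrite in_set mb RA //; by move=> <-.
    have cov : forall w, ~~ matched w -> exists z, R w z.
      have sU : #|~: Am| + #|~: Am| <= \sum_w #|[set x | R w x]| by lia.
      move=> w uw; have := pU sU w; rewrite in_setC in_set uw /= => H.
      have : 0 < #|[set x | R w x]| by rewrite H //; lia.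
      by case/card_gt0P => z; rewrite inE; exists z.
    have Ls : forall x, size (L x) = 2.+1 by move=> x; rewrite L_size ?card1 ?r_m.
    have [m [g [gb mE E1 E2]]] := blocks x0 (L_in cov) (L_cl nK cov) (L_uniq cov) Ls.
    exists m; split; first lia.
    case: gb => h gh hg.
    exists h; split; first exact: (can_inj hg).
    move=> u v; rewrite /copies /K3 => /andP[/eqP u1 uv].
    have Lxy : L (h u) = L (h v) by apply/eqP; rewrite -E1 !hg u1.
    rewrite -(E2 (h u)) -(E2 (h v)) !hg Lxy.
    exact: good3 cov card1 _ _ _ _ uv.
  + case=> m [n3 [h [hi hE]]].
    have hb : bijective h by apply: inj_card_bij; rewrite // card_prod !card_ord; lia.
    case: hb => g hg gh.
    have := @ub _ c0 m 3 2 h (fun x => ex_intro _ (g x) (gh x)).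
    have bb : forall i, size (undup [seq c0 (h (i, j)) | j <- enum 'I_3]) <= 2.
      move=> i; apply: (K3block (q := fun j => h (i, j))) => // j j' jj.
      by apply: hE; rewrite /copies /K3 /= eqxx jj.
    move/(_ bb); rewrite kc0 => kb; lia.
-
  move=> nK tp.
  have h2 := sumU_le nK.
  rewrite big_split /= sum_card in h2.
  have h4 : \sum_x ((x \in Am : nat) + (x \in Am : nat)) <= \sum_x #|[set w | R w x]|.
    by apply: leq_sum => x _; exact: ptA2.
  rewrite big_split /= sum_card in h4.
  split; first lia.
  split.
  + move=> k4.
    have pU := sum_eq_pt (fun w => ptU nK w).
    rewrite big_split /= sum_card in pU.
    have card2 : forall b, matched b -> #|cn b (p b)| = 2 by move=> b mb; exact: paired2.
    have cov : forall w, ~~ matched w -> exists z, R w z.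
      have sU : #|~: Am| + #|~: Am| <= \sum_w #|[set x | R w x]| by lia.
      move=> w uw; have := pU sU w; rewrite in_setC in_set uw /= => H.
      have : 0 < #|[set x | R w x]| by rewrite H //; lia.
      by case/card_gt0P => z; rewrite inE; exists z.
    have Ls : forall x, size (L x) = 3.+1 by move=> x; rewrite L_size ?card2 ?r_m.
    have [m [g [gb mE E1 E2]]] := blocks x0 (L_in cov) (L_cl nK cov) (L_uniq cov) Ls.
    exists m; split; first lia.
    case: gb => h gh hg.
    exists h; split; first exact: (can_inj hg).
    move=> u v; rewrite /copies /K4_minus_e => /andP[/eqP u1 /andP[uv c23]].
    have Lxy : L (h u) = L (h v) by apply/eqP; rewrite -E1 !hg u1.
    rewrite -(E2 (h u)) -(E2 (h v)) !hg Lxy.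
    exact: good4 cov card2 _ _ _ _ uv c23.
  + case=> m [n4 [h [hi hE]]].
    have hb : bijective h by apply: inj_card_bij; rewrite // card_prod !card_ord; lia.
    case: hb => g hg gh.
    have := @ub _ c0 m 4 3 h (fun x => ex_intro _ (g x) (gh x)).
    have ne : forall a b, a < 4 -> b < 4 -> a != b -> (inord a : 'I_4) != inord b.
      by move=> a b ha hb ab; apply/eqP => /(congr1 (@nat_of_ord 4)); rewrite !inordK //; apply/eqP.
    have ee : forall i a b, a < 4 -> b < 4 -> a != b -> a < 2 -> e (h (i, inord a)) (h (i, inord b)).
      move=> i a b ha hb ab a2; apply: hE; rewrite /copies /K4_minus_e /= eqxx ne //= !inordK //.
      by move: a2; case: a {ha ab} => [|[|]].
    have bb : forall i, size (undup [seq c0 (h (i, j)) | j <- enum 'I_4]) <= 3.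
      move=> i; apply: (Kmblock (q := fun j => h (i, j))) => //; exact: ee.
    move/(_ bb); rewrite kc0 => kb; lia.
Qed.

End G.

Theorem mainTheorem10 (T : finType) (e : rel T) :
  simple_graph e -> max_degree3 e ->
  forall k : nat, Wplus_K3 e k ->
  (* (i) *)
  (#|T| <= 2 * k /\
   (2 * k = #|T| <->
    exists m, 4 * m = #|T| /\ isomorphic e (copies m K4))) /\
  (* (ii) *)
  (~ has_K4_component e ->
   #|T| * 2 <= 3 * k /\
   (3 * k = #|T| * 2 <->
    exists m, 3 * m = #|T| /\ contains_subgraph e (copies m K3))) /\
  (* (iii) *)
  (~ has_K4_component e -> triangles_paired e ->
   #|T| * 3 <= 4 * k /\
   (4 * k = #|T| * 3 <->
    exists m, 4 * m = #|T| /\ contains_subgraph e (copies m K4_minus_e))).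
Proof.
move=> [esy eirr] [edeg [x0 _]] k Wk.
exact: (main_sec esy eirr edeg x0 Wk).
Qed.
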